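(* Let $G$ be a group with identity $e$, $A$ a set containing two distinct elements $0$ and $1$, $S \subseteq G$ finite with $e \in S$, and $r \in S \setminus \{e\}$. Let $p \in A^S$ be given by $p(r) = 1$ and $p(s) = 0$ for $s \in S \setminus\{r\}$, and let $\tau : A^G \to A^G$ be the lazy cellular automaton with minimal local map $\mu : A^S \to A$, unique active transition $p$ and writing symbol $\mu(p) = 1$. Then for any $n\geq 2$, $\mathrm{ord}(\tau) > n$ if and only if $r^j\notin S$ for all $2\leq j \leq n$.
   Context: $A^G$ is the set of maps $G \to A$ with shift action $(g\cdot x)(h) := x(hg)$. A cellular automaton is a map $\tau : A^G \to A^G$ with a finite $S \subseteq G$ and $\mu : A^S \to A$ such that $\tau(x)(g) = \mu((g\cdot x)|_S)$; the minimal local map is the local defining map on the neighborhood of smallest cardinality. $\tau$ is lazy with unique active transition $p \in A^S$ and writing symbol $\mu(p)$ if $e \in S$ and for all $z \in A^S$: $\mu(z) = z(e)$ iff $z \neq p$. $\tau^k$ is the $k$-fold composition, $\tau^0$ the identity; $\mathrm{ord}(\tau) := |\{\tau^k : k \in \mathbb{N}\}|$, $\mathbb{N}=\{0,1,\dots\}$. *)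

(* Defs.v *)
From Stdlib Require Import List Arith.
Import ListNotations.

Definition is_group {G : Type} (mul : G -> G -> G) (inv : G -> G) (e : G) : Prop :=
  (forall a b c, mul (mul a b) c = mul a (mul b c)) /\
  (forall a, mul e a = a) /\ (forall a, mul a e = a) /\
  (forall a, mul (inv a) a = e) /\ (forall a, mul a (inv a) = e).

Fixpoint gpow {G : Type} (mul : G -> G -> G) (e r : G) (j : nat) : G :=
  match j with
  | O => e
  | S j' => mul (gpow mul e r j') r
  end.

Definition finite_set {G : Type} (S : G -> Prop) : Prop :=
  exists l : list G, forall s, S s -> In s l.

Definition shift {G A : Type} (mul : G -> G -> G) (g : G) (x : G -> A) : G -> A :=
  fun h => x (mul h g).

Definition restr {G A : Type} (S : G -> Prop) (x : G -> A) : {s : G | S s} -> A :=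
  fun s => x (proj1_sig s).

Definition ca {G A : Type} (mul : G -> G -> G) (S : G -> Prop)
  (mu : ({s : G | S s} -> A) -> A) : (G -> A) -> (G -> A) :=
  fun x g => mu (restr S (shift mul g x)).

Definition is_lazy {G A : Type} (S : G -> Prop) (e : G) (He : S e)
  (mu : ({s : G | S s} -> A) -> A) (p : {s : G | S s} -> A) : Prop :=
  forall z, mu z = z (exist _ e He) <-> z <> p.

Fixpoint iter_map {X : Type} (k : nat) (tau : X -> X) : X -> X :=
  match k with
  | O => fun x => x
  | S k' => fun x => tau (iter_map k' tau x)
  end.

(* ord(tau) > n, i.e. |{tau^k : k in N}| > n (the set may be infinite):
   the set contains at least n+1 pairwise distinct elements *)
Definition ord_gt {X : Type} (tau : X -> X) (n : nat) : Prop :=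
  exists l : list (X -> X),
    length l = S n /\ NoDup l /\ forall f, In f l -> exists k, f = iter_map k tau.

(* Main.v *)
Require Import Defs.
From Stdlib Require Import List Arith Lia Classical FunctionalExtensionality ClassicalEpsilon.

Lemma cancel_l {G} (mul : G -> G -> G) inv e (HG : is_group mul inv e) a b c :
  mul a b = mul a c -> b = c.
Proof.
  destruct HG as (Ha & H1 & H2 & H3 & H4). intro H.
  rewrite <- (H1 b), <- (H1 c), <- (H3 a), !Ha, H. reflexivity.
Qed.

Lemma cancel_r {G} (mul : G -> G -> G) inv e (HG : is_group mul inv e) a b c :
  mul b a = mul c a -> b = c.
Proof.
  destruct HG as (Ha & H1 & H2 & H3 & H4). intro H.
  rewrite <- (H2 b), <- (H2 c), <- (H4 a), <- !Ha, H. reflexivity.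
Qed.

Lemma gpow_comm {G} (mul : G -> G -> G) inv e (HG : is_group mul inv e) r i :
  mul r (gpow mul e r i) = mul (gpow mul e r i) r.
Proof.
  destruct HG as (Ha & H1 & H2 & H3 & H4).
  induction i; simpl. rewrite H1, H2; reflexivity.
  rewrite <- Ha, IHi. reflexivity.
Qed.

Lemma gpow_add {G} (mul : G -> G -> G) inv e (HG : is_group mul inv e) r a b :
  gpow mul e r (a + b) = mul (gpow mul e r a) (gpow mul e r b).
Proof.
  destruct HG as (Ha & H1 & H2 & H3 & H4).
  induction b; simpl. rewrite Nat.add_0_r, H2; reflexivity.
  rewrite Nat.add_succ_r. simpl. rewrite IHb, Ha. reflexivity.
Qed.

Theorem proposition3
  (G : Type) (mul : G -> G -> G) (inv : G -> G) (e : G)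
  (HG : is_group mul inv e)
  (A : Type) (a0 a1 : A) (Ha01 : a0 <> a1)
  (S : G -> Prop) (HSfin : finite_set S) (HeS : S e)
  (r : G) (HrS : S r) (Hre : r <> e)
  (p : {s : G | S s} -> A)
  (Hp : forall s : {s : G | S s},
          (proj1_sig s = r -> p s = a1) /\ (proj1_sig s <> r -> p s = a0))
  (mu : ({s : G | S s} -> A) -> A)
  (Hlazy : is_lazy S e HeS mu p) (Hmup : mu p = a1)
  (n : nat) (Hn : 2 <= n) :
  ord_gt (ca mul S mu) n <->
  (forall j : nat, 2 <= j <= n -> ~ S (gpow mul e r j)).
Proof.
  pose proof HG as (Hass & Hel & Her & Hinvl & Hinvr).
  set (tau := ca mul S mu).
  assert (Hpe : p (exist _ e HeS) = a0).
  { apply (proj2 (Hp _)). simpl. intro H; apply Hre; symmetry; exact H. }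
  assert (Hpr : p (exist _ r HrS) = a1) by (apply (proj1 (Hp _)); reflexivity).
  assert (T1 : forall y g, restr S (shift mul g y) <> p -> tau y g = y g).
  { intros y g H. unfold tau, ca. rewrite (proj2 (Hlazy _) H).
    unfold restr, shift; simpl. rewrite Hel. reflexivity. }
  assert (T2 : forall y g, restr S (shift mul g y) = p ->
     tau y g = a1 /\ y g = a0 /\ y (mul r g) = a1 /\
     (forall s, S s -> s <> r -> y (mul s g) = a0)).
  { intros y g H. split; [unfold tau, ca; rewrite H; exact Hmup|].
    split; [| split].
    - rewrite <- (Hel g). change (restr S (shift mul g y) (exist _ e HeS) = a0).
      rewrite H. exact Hpe.
    - change (restr S (shift mul g y) (exist _ r HrS) = a1). rewrite H; exact Hpr.
    - intros s Hs Hsr. change (restr S (shift mul g y) (exist _ s Hs) = a0).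
      rewrite H. apply (proj2 (Hp _)). exact Hsr. }
  assert (Tflip : forall y g, tau y g <> y g -> restr S (shift mul g y) = p).
  { intros y g H. apply NNPP. intro H'. apply H, T1, H'. }
  assert (Mono1 : forall y g, y g = a1 -> tau y g = a1).
  { intros y g H. destruct (classic (restr S (shift mul g y) = p)) as [E|E].
    - apply (T2 y g E). - rewrite T1; auto. }
  assert (Mono0 : forall y g, tau y g = a0 -> y g = a0).
  { intros y g H. destruct (classic (restr S (shift mul g y) = p)) as [E|E].
    - exfalso. apply Ha01. rewrite <- H. apply (T2 y g E).
    - rewrite <- T1; auto. }
  assert (Persist : forall x t m g, iter_map t tau x g = a1 -> iter_map (m + t) tau x g = a1).
  { intros x t m g H. induction m; simpl; auto. }
  assert (Back1 : forall x k g,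
     iter_map (Datatypes.S (Datatypes.S k)) tau x g <> iter_map (Datatypes.S k) tau x g ->
     iter_map (Datatypes.S k) tau x (mul r g) <> iter_map k tau x (mul r g)).
  { intros x k g H Hc.
    destruct (T2 _ _ (Tflip _ _ H)) as (Ha & Hb & Hc' & Hd).
    assert (E : restr S (shift mul g (iter_map k tau x)) = p).
    { apply functional_extensionality. intros [s Hs]. unfold restr, shift; simpl.
      destruct (classic (s = r)) as [Esr|Esr].
      - subst s. rewrite (proj1 (Hp (exist _ r Hs)) eq_refl).
        rewrite <- Hc. exact Hc'.
      - rewrite (proj2 (Hp (exist _ s Hs)) Esr). apply Mono0. exact (Hd s Hs Esr). }
    destruct (T2 _ _ E) as (E1 & _).
    apply Ha01. rewrite <- Hb. exact E1. }
  assert (BackN : forall i m x g,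
     iter_map (Datatypes.S (i + m)) tau x g <> iter_map (i + m) tau x g ->
     iter_map (Datatypes.S m) tau x (mul (gpow mul e r i) g) <> iter_map m tau x (mul (gpow mul e r i) g)).
  { induction i; intros m x g H.
    - simpl. rewrite Hel. exact H.
    - simpl gpow. rewrite Hass. apply IHi. apply (Back1 x (i + m) g). exact H. }
  split.
  -
    intros Hord j Hj HSj.
    destruct j as [|j']; [lia|].
    assert (NoFlip : forall m x g, ~ (iter_map (Datatypes.S (j' + m)) tau x g <> iter_map (j' + m) tau x g)).
    { intros m x g H.
      pose proof (BackN j' m x g H) as H2.
      destruct (T2 _ _ (Tflip _ _ H)) as (_ & Hb & _ & Hd).
      destruct (T2 _ _ (Tflip _ _ H2)) as (Ha2 & _ & Hc2 & _).
      rewrite <- Hass, (gpow_comm mul inv e HG) in Hc2.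
      change (mul (gpow mul e r j') r) with (gpow mul e r (Datatypes.S j')) in Hc2.
      destruct (classic (gpow mul e r (Datatypes.S j') = r)) as [Er|Er].
      + assert (Ee : gpow mul e r j' = e).
        { apply (cancel_r mul inv e HG r). rewrite Hel. exact Er. }
        rewrite Ee, Hel in Ha2.
        pose proof (Persist x (Datatypes.S m) (j' - 1) g Ha2) as P.
        replace (j' - 1 + Datatypes.S m) with (j' + m) in P by lia.
        apply Ha01. rewrite <- Hb. exact P.
      + pose proof (Persist x m j' _ Hc2) as P.
        pose proof (Hd _ HSj Er) as Q. exact (Ha01 (eq_trans (eq_sym Q) P)). }
    assert (Stable : forall k, j' <= k -> iter_map k tau = iter_map j' tau).
    { intros k Hk. replace k with ((k - j') + j') by lia.
      generalize (k - j'). intro m. induction m.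
      - reflexivity.
      - rewrite <- IHm. apply functional_extensionality. intro x.
        apply functional_extensionality. intro g.
        change (iter_map (Datatypes.S m + j') tau x g) with (iter_map (Datatypes.S (m + j')) tau x g).
        apply NNPP. rewrite (Nat.add_comm m j'). apply NoFlip. }
    destruct Hord as (l & Hlen & Hnd & Hin).
    assert (Hincl : incl l (map (fun k => iter_map k tau) (seq 0 (Datatypes.S j')))).
    { intros f Hf. destruct (Hin f Hf) as [k ->]. apply in_map_iff.
      destruct (le_lt_dec j' k) as [Hk|Hk].
      - exists j'. split; [symmetry; apply Stable; lia | apply in_seq; lia].
      - exists k. split; [reflexivity | apply in_seq; lia]. }
    pose proof (NoDup_incl_length Hnd Hincl) as Hle.
    rewrite length_map, length_seq in Hle. lia.
  - intros Hno.
    assert (Pw1 : gpow mul e r 1 = r) by (simpl; apply Hel).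
    assert (Key : forall d, 1 <= d <= n -> forall s, S s -> s = gpow mul e r d -> s = r).
    { intros d Hd s Hs Es. destruct (Nat.eq_dec d 1) as [->|Hd1].
      - rewrite Es; exact Pw1.
      - exfalso. apply (Hno d); [lia|]. rewrite <- Es; exact Hs. }
    set (x := fun h : G => if excluded_middle_informative (h = e) then a1 else a0).
    set (C := fun k h => exists i, i <= k /\ mul (gpow mul e r i) h = e).
    assert (Char : forall k, k <= n -> forall h,
        (C k h -> iter_map k tau x h = a1) /\ (~ C k h -> iter_map k tau x h = a0)).
    { induction k; intros Hk h.
      - simpl. unfold x. destruct (excluded_middle_informative (h = e)) as [Eh|Eh].
        + split; auto. intro Hc; exfalso; apply Hc. exists 0. split; auto. simpl. rewrite Hel; exact Eh.
        + split; auto. intros (i & Hi & Ei). exfalso. apply Eh.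
          assert (i = 0) by lia. subst i. simpl in Ei. rewrite Hel in Ei. exact Ei.
      - assert (IH := fun h => IHk ltac:(lia) h).
        change (iter_map (Datatypes.S k) tau x h) with (tau (iter_map k tau x) h).
        split.
        + intros HC. destruct (classic (C k h)) as [HCk|HCk].
          * apply Mono1. apply (proj1 (IH h)). exact HCk.
          * destruct HC as (i & Hi & Ei).
            assert (i = Datatypes.S k).
            { destruct (Nat.eq_dec i (Datatypes.S k)); auto. exfalso. apply HCk. exists i. split; [lia|exact Ei]. }
            subst i.
            assert (E : restr S (shift mul h (iter_map k tau x)) = p).
            { apply functional_extensionality. intros [s Hs]. unfold restr, shift; simpl.
              destruct (classic (s = r)) as [Esr|Esr].
              - subst s. rewrite (proj1 (Hp (exist _ r Hs)) eq_refl).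
                apply (proj1 (IH _)). exists k. split; auto.
                rewrite <- Hass. exact Ei.
              - rewrite (proj2 (Hp (exist _ s Hs)) Esr). apply (proj2 (IH _)).
                intros (i0 & Hi0 & Ei2). apply Esr.
                apply (Key (Datatypes.S k - i0)); [lia | exact Hs |].
                assert (Ei3 : mul (mul (gpow mul e r i0) s) h = mul (gpow mul e r (Datatypes.S k)) h)
                  by (rewrite Hass, Ei2, Ei; reflexivity).
                apply (cancel_r mul inv e HG) in Ei3. rename Ei3 into Ei2'. clear Ei2. rename Ei2' into Ei2.
                replace (Datatypes.S k) with (i0 + (Datatypes.S k - i0)) in Ei2 by lia.
                rewrite (gpow_add mul inv e HG) in Ei2.
                apply (cancel_l mul inv e HG) in Ei2. exact Ei2. }
            exact (proj1 (T2 _ _ E)).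
        + intros HC.
          assert (HCk : ~ C k h).
          { intros (i & Hi & Ei). apply HC. exists i. split; [lia|exact Ei]. }
          rewrite T1; [apply (proj2 (IH h)); exact HCk|].
          intro E. pose proof (f_equal (fun z => z (exist _ r HrS)) E) as E2.
          simpl in E2. unfold restr, shift in E2. simpl in E2. rewrite Hpr in E2.
          rewrite (proj2 (IH (mul r h))) in E2; [exact (Ha01 E2)|].
          intros (i & Hi & Ei). apply HC. exists (Datatypes.S i). split; [lia|].
          simpl. rewrite Hass. exact Ei. }
    assert (Dist : forall k k', k < k' <= n -> iter_map k tau <> iter_map k' tau).
    { intros k k' Hkk E.
      set (h := inv (gpow mul e r k')).
      assert (H1 : iter_map k' tau x h = a1).
      { apply (proj1 (Char k' ltac:(lia) h)). exists k'. split; [lia| apply Hinvr]. }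
      assert (H0 : iter_map k tau x h = a0).
      { apply (proj2 (Char k ltac:(lia) h)). intros (i & Hi & Ei).
        unfold h in Ei.
        assert (Ei3 : mul (gpow mul e r i) (inv (gpow mul e r k')) = mul (gpow mul e r k') (inv (gpow mul e r k')))
          by (rewrite Hinvr; exact Ei).
        apply (cancel_r mul inv e HG) in Ei3. clear Ei. rename Ei3 into Ei.
        replace k' with (i + (k' - i)) in Ei by lia.
        rewrite (gpow_add mul inv e HG) in Ei.
        assert (Ei3 : mul (gpow mul e r i) e = mul (gpow mul e r i) (gpow mul e r (k' - i)))
          by (rewrite Her; exact Ei).
        apply (cancel_l mul inv e HG) in Ei3. clear Ei. rename Ei3 into Ei.
        apply Hre. symmetry. apply (Key (k' - i)); [lia | exact HeS | exact Ei]. }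
      rewrite E in H0. apply Ha01. rewrite <- H0, H1. reflexivity. }
    exists (map (fun k => iter_map k tau) (seq 0 (Datatypes.S n))).
    split; [rewrite length_map, length_seq; reflexivity|]. split.
    + apply NoDup_map_NoDup_ForallPairs; [|apply seq_NoDup].
      intros a b Ha Hb Eab. apply in_seq in Ha, Hb.
      destruct (lt_eq_lt_dec a b) as [[Hab|Hab]|Hab]; auto.
      * exfalso. apply (Dist a b); [lia|exact Eab].
      * exfalso. apply (Dist b a); [lia|symmetry; exact Eab].
    + intros f Hf. apply in_map_iff in Hf. destruct Hf as (k & <- & _). exists k. reflexivity.
Qed.
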